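(* Let $S\in\mathbb{R}^{2n\times 2n}$ be a symplectic matrix, i.e. $S^TJS=J$. Then there exists a P-SympNet $\Phi_h$ of degree $d\ge 2$ with $k$ layers such that $Sx=\Phi_h(x)$ for all $x\in\mathbb{R}^{2n}$. Moreover: (i) for arbitrary symplectic $S$ one can take $k\le 5n$; (ii) if $S=\begin{pmatrix}A&B\\ C&D\end{pmatrix}$ with $A,B,C,D\in\mathbb{R}^{n\times n}$ and $\det A\neq 0$, one can take $k\le 4n$; (iii) if $S=e^{hJM}$ with $M=M^T\in\mathbb{R}^{2n\times 2n}$ and $h>0$ sufficiently small, then there is such a P-SympNet with time step $h$ and $k\le 2n$.
   Context: $x=(p,q)\in\mathbb{R}^{2n}$, $J=\begin{pmatrix}0&-I\\ I&0\end{pmatrix}$. A P-SympNet of degree $d$ with $k$ layers and time step $h$ is a composition $\phi^{H_k}_h\circ\cdots\circ\phi^{H_1}_h$ where $H_i(x)=\alpha_i(w_i^Tx)$ with $w_i\in\mathbb{R}^{2n}$ and $\alpha_i(z)=\sum_{j=1}^d a_{ij}z^j$ a real univariate polynomial; each layer is the exact flow of $\dot x=J\nabla H_i(x)$, given explicitly by $\phi^{H_i}_h(x)=x+h\,\alpha_i'(w_i^Tx)\,Jw_i$. *)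

(* Defs.v *)
From HB Require Import structures.
From mathcomp Require Import all_boot all_order all_algebra.
From mathcomp Require Import all_classical all_reals topology normedtype sequences.
Set Implicit Arguments. Unset Strict Implicit. Unset Printing Implicit Defensive.
Import Order.TTheory GRing.Theory Num.Theory numFieldNormedType.Exports.
Local Open Scope ring_scope.

Section PSympNet.
Variable R : realType.

Definition Jmx (n : nat) : 'M[R]_(n + n) := block_mx 0 (- 1%:M) 1%:M 0.

Definition symplecticmx (n : nat) (S : 'M[R]_(n + n)) : Prop :=
  S^T *m Jmx n *m S = Jmx n.

(* A layer is a pair (alpha, w) with alpha a real univariate polynomial and
   w in R^{2n}; it acts as the explicit exact flow
   x |-> x + h alpha'(w^T x) J w. *)
Definition psn_layer (n : nat) (h : R) (l : {poly R} * 'cV[R]_(n + n))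
    (x : 'cV[R]_(n + n)) : 'cV[R]_(n + n) :=
  x + (h * (l.1)^`().[(l.2^T *m x) 0 0]) *: (Jmx n *m l.2).

(* The P-SympNet given by the list of layers [l_1; ...; l_k]:
   phi_{l_k} o ... o phi_{l_1} (layer l_1 applied first). *)
Definition psn_eval (n : nat) (h : R) (s : seq ({poly R} * 'cV[R]_(n + n)))
    (x : 'cV[R]_(n + n)) : 'cV[R]_(n + n) :=
  foldl (fun y l => psn_layer h l y) x s.

(* Each alpha_i(z) = sum_{j=1}^d a_ij z^j : degree <= d, no constant term. *)
Definition psn_degree (n : nat) (d : nat) (s : seq ({poly R} * 'cV[R]_(n + n))) : bool :=
  all (fun l : {poly R} * 'cV[R]_(n + n) => (size l.1 <= d.+1)%N && (l.1`_0 == 0)) s.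

Definition expmx (m : nat) (A : 'M[R]_m) : 'M[R]_m :=
  \matrix_(i, j) limn (fun N : nat => (\sum_(k < N) (k`!%:R)^-1 *: A ^+ k) i j).

End PSympNet.

(* Main.v *)
Require Import Defs.
From HB Require Import structures.
From mathcomp Require Import all_boot all_order all_algebra.
From mathcomp Require Import all_classical all_reals topology normedtype sequences.
From mathcomp Require Import ring lra zify.
From Stdlib Require Import Lia.
Import Order.TTheory GRing.Theory Num.Theory numFieldNormedType.Exports.
Local Open Scope ring_scope.
Set Implicit Arguments. Unset Strict Implicit. Unset Printing Implicit Defensive.

Section Alg.
Variable R : realType.
Variable n : nat.
Local Notation m := (n + n)%N.
Local Notation J := (Jmx R n).
Implicit Types (x y z u : 'cV[R]_m) (S : 'M[R]_m).

Lemma trJ : J^T = - J.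
Proof. by rewrite /Jmx tr_block_mx opp_block_mx !trmx0 !oppr0 linearN /= trmx1 opprK. Qed.

Lemma JJ : J *m J = - 1%:M.
Proof.
rewrite /Jmx mulmx_block !(mulmx0, mul0mx, addr0, add0r, mulmx1, mul1mx, mulmxN, mulNmx).
by rewrite -!raddfN /= -scalar_mx_block.
Qed.

Lemma JtJ : J^T *m J = 1%:M.
Proof. by rewrite trJ mulNmx JJ opprK. Qed.

Lemma JJt : J *m J^T = 1%:M.
Proof. by rewrite trJ mulmxN JJ opprK. Qed.

Definition om x y : R := (x^T *m J *m y) 0 0.

Lemma omDl x y z : om (x + y) z = om x z + om y z.
Proof. by rewrite /om linearD /= !mulmxDl mxE. Qed.
Lemma omDr x y z : om x (y + z) = om x y + om x z.
Proof. by rewrite /om !mulmxDr mxE. Qed.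
Lemma omZl a x y : om (a *: x) y = a * om x y.
Proof. by rewrite /om linearZ /= -!scalemxAl mxE. Qed.
Lemma omZr a x y : om x (a *: y) = a * om x y.
Proof. by rewrite /om -scalemxAr mxE. Qed.
Lemma omNl x y : om (- x) y = - om x y.
Proof. by rewrite -scaleN1r omZl mulN1r. Qed.
Lemma omNr x y : om x (- y) = - om x y.
Proof. by rewrite -scaleN1r omZr mulN1r. Qed.
Lemma omBl x y z : om (x - y) z = om x z - om y z.
Proof. by rewrite omDl omNl. Qed.
Lemma omBr x y z : om x (y - z) = om x y - om x z.
Proof. by rewrite omDr omNr. Qed.

Lemma om_anti x y : om y x = - om x y.
Proof.
rewrite /om -[in RHS](trmxK (x^T *m J *m y)) [in RHS]mxE.
by rewrite !trmx_mul trmxK trJ mulNmx mulmxN [in RHS]mxE opprK mulmxA.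
Qed.

Lemma om_self x : om x x = 0.
Proof.
have := om_anti x x => /eqP; rewrite -subr_eq0 opprK -mulr2n mulrn_eq0 /=.
by move/eqP.
Qed.

Lemma om_symp S x y : symplecticmx S -> om (S *m x) (S *m y) = om x y.
Proof.
move=> hS; rewrite /om trmx_mul !mulmxA -(mulmxA x^T S^T J) -(mulmxA x^T (S^T *m J) S).
by rewrite hS.
Qed.

Lemma omJ y : om (J *m y) y = 0 -> y = 0.
Proof.
rewrite /om trmx_mul -(mulmxA y^T J^T J) JtJ mulmx1 mxE => H.
apply/matrixP => i j; rewrite (ord1 j) mxE.
have: \sum_j0 y j0 0 ^+ 2 = 0.
  by rewrite -[RHS]H; apply: eq_bigr => k _; rewrite mxE expr2.
move/eqP; rewrite psumr_eq0; last by move=> k _; rewrite sqr_ge0.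
move=> /allP Hall; have := Hall i (mem_index_enum _).
by rewrite /= sqrf_eq0 => /eqP.
Qed.

Lemma om_nondeg y : (forall x, om x y = 0) -> y = 0.
Proof. by move=> h; apply: omJ; apply: h. Qed.

Lemma mx_col_ext (A B : 'M[R]_m) : (forall x, A *m x = B *m x) -> A = B.
Proof.
move=> h; apply/matrixP => i j.
have := congr1 (fun M : 'cV_m => M i 0) (h (delta_mx j 0)).
by rewrite -!colE !mxE.
Qed.

Lemma entry_e (A : 'M[R]_m) (i j : 'I_m) : (delta_mx (0 : 'I_1) i *m A *m delta_mx j (0 : 'I_1)) 0 0 = A i j.
Proof. by rewrite -rowE -colE !mxE. Qed.

Lemma symp_om S : (forall x y, om (S *m x) (S *m y) = om x y) -> symplecticmx S.
Proof.
move=> h; rewrite /symplecticmx; apply/matrixP => i j.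
have := h (delta_mx i 0) (delta_mx j 0).
rewrite /om !trmx_mul !trmx_delta !mulmxA.
rewrite -(mulmxA _ S^T J) -(mulmxA _ (S^T *m J) S) !entry_e.
by [].
Qed.

Lemma symp_mul (A B : 'M[R]_m) : symplecticmx A -> symplecticmx B -> symplecticmx (A *m B).
Proof.
move=> hA hB; apply: symp_om => x y.
by rewrite -!mulmxA !om_symp.
Qed.

Definition T (c : R) u : 'M[R]_m := 1%:M + c *: (u *m (u^T *m J)).

Lemma T_apply c u x : T c u *m x = x + (c * om u x) *: u.
Proof.
rewrite /T mulmxDl mul1mx -scalemxAl -!mulmxA (mulmxA u^T).
rewrite [u^T *m J *m x]mx11_scalar mul_mx_scalar scalerA.
by rewrite /om.
Qed.

Lemma T_symp c u : symplecticmx (T c u).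
Proof.
apply: symp_om => x y; rewrite !T_apply.
rewrite !(omDl, omDr, omZl, omZr) om_self (om_anti u x) (om_anti y u).
ring.
Qed.

Lemma T_inv c u x : T (- c) u *m (T c u *m x) = x.
Proof.
rewrite !T_apply omDr omZr om_self mulr0 addr0 -addrA -scalerDl.
by rewrite mulNr addrN scale0r addr0.
Qed.

Definition evalT (cs : seq (R * 'cV[R]_m)) x :=
  foldl (fun y p => T p.1 p.2 *m y) x cs.

Definition rep S (k : nat) := exists cs : seq (R * 'cV[R]_m),
  (size cs <= k)%N /\ forall x, S *m x = evalT cs x.

Lemma rep_le S k k' : (k <= k')%N -> rep S k -> rep S k'.
Proof. by move=> hk [cs [h1 h2]]; exists cs; split => //; apply: leq_trans hk. Qed.

Lemma rep1 k : rep 1%:M k.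
Proof. by exists [::]; split => // x; rewrite mul1mx. Qed.

Lemma rep_T c u S k : rep (T c u *m S) k -> rep S k.+1.
Proof.
move=> [cs [h1 h2]]; exists (rcons cs (- c, u)); split.
  by rewrite size_rcons.
move=> x; rewrite /evalT foldl_rcons -/(evalT cs x) -h2 /=.
by rewrite -mulmxA T_inv.
Qed.

Section Step.
Variables (S : 'M[R]_m) (x : 'cV[R]_m).
Hypothesis hS : symplecticmx S.
Hypothesis hq : om x (S *m x) != 0.
Let u := x - S *m x.
Let c := (om x (S *m x))^-1.

Lemma step_symp : symplecticmx (T c u *m S).
Proof. exact: symp_mul (T_symp _ _) hS. Qed.

Lemma step_fix : (T c u *m S) *m x = x.
Proof.
rewrite -mulmxA T_apply /u omBl om_self subr0 mulVf // scale1r.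
by rewrite (addrC (S *m x)) subrK.
Qed.

Lemma step_fixS y : S *m y = y -> (T c u *m S) *m y = y.
Proof.
move=> hy; have hy' : om (S *m x) y = om x y by rewrite -{1}hy om_symp.
rewrite -mulmxA hy T_apply /u omBl hy'.
by rewrite subrr mulr0 scale0r addr0.
Qed.

Lemma step_nfix : S *m x != x.
Proof. by apply: contra hq => /eqP ->; rewrite om_self. Qed.

End Step.

Lemma rank_dec S S' x :
  (forall y, S *m y = y -> S' *m y = y) -> S' *m x = x -> S *m x != x ->
  (\rank (S' - 1%:M)%R < \rank (S - 1%:M)%R)%N.
Proof.
move=> hinc hx hnx.
set K := kermx (S - 1%:M)^T; set K' := kermx (S' - 1%:M)^T.
have fixE (A : 'M[R]_m) y : (y^T <= kermx (A - 1%:M)^T)%MS = (A *m y == y).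
  rewrite sub_kermx -trmx_mul -trmx0 (inj_eq (@trmx_inj _ _ _)).
  by rewrite mulmxBl mul1mx subr_eq0.
have KK' : (K <= K')%MS.
  apply/rV_subP => v /submxP [w ->]; set v' := w *m K.
  have : (v'^T^T <= K)%MS by rewrite trmxK submxMl.
  by rewrite fixE => /eqP /hinc /eqP; rewrite -fixE trmxK.
have nK'K : ~~ (K' <= K)%MS.
  apply: contra hnx => hK; have : (x^T <= K)%MS.
    by apply: submx_trans hK; rewrite fixE hx.
  by rewrite fixE.
have := mxrank_leqif_sup KK'; rewrite (negPf nK'K) => /leqif_eq hlt.
have {hlt} hlt : (\rank K < \rank K')%N.
  by rewrite ltn_neqAle hlt andbT; apply/negP => /eqP h; move: nK'K;
     rewrite -(mxrank_leqif_sup KK').2 h eqxx.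
move: hlt; rewrite !mxrank_ker !mxrank_tr => hlt.
have h1 := rank_leq_row (S - 1%:M); have h2 := rank_leq_row (S' - 1%:M).
lia.
Qed.



Lemma polar S : (forall x, om x (S *m x) = 0) ->
  forall x y, om y (S *m x) = - om x (S *m y).
Proof.
move=> h x y; have := h (x + y); rewrite mulmxDr !(omDl, omDr) !h.
move=> H; lra.
Qed.

Lemma one_ext S : (forall y, S *m y = y) -> S = 1%:M.
Proof. by move=> h; apply: mx_col_ext => y; rewrite h mul1mx. Qed.

Lemma rank0 S : (\rank (S - 1%:M)%R <= 0)%N -> S = 1%:M.
Proof.
rewrite leqn0 mxrank_eq0 => /eqP h; apply/eqP; rewrite -subr_eq0; exact/eqP.
Qed.

Lemma gen_rep r : forall S, symplecticmx S -> (\rank (S - 1%:M)%R <= r)%N ->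
  rep S (2 * r).
Proof.
elim: r => [|r IH] S hS hr.
  by rewrite (rank0 hr); exact: rep1.
have [->|hS1] := eqVneq S 1%:M; first exact: rep1.
case: (pselect (exists x, om x (S *m x) != 0)) => [[x hx]|hno].
  have hr' := rank_dec (step_fixS x hS) (step_fix hx) (step_nfix hx).
  have hle : (\rank (T (om x (S *m x))^-1 (x - S *m x) *m S - 1%:M)%R <= r)%N.
    by rewrite -ltnS; apply: leq_trans hr' hr.
  have := IH _ (step_symp x hS) hle.
  by move=> /rep_T; apply: rep_le; lia.
have h0 : forall x, om x (S *m x) = 0.
  by move=> x; apply/eqP/negP => hx; apply: hno; exists x; apply/negP.
have [y hy] : exists y, S *m y != y.
  apply/not_existsP => hall; move/eqP: hS1; apply.
  by apply: one_ext => y; have := hall y => /negP; rewrite negbK => /eqP.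
set u := S *m y - y; set S1 := T 1 u *m S.
have hS1s : symplecticmx S1 by apply: symp_mul; [apply: T_symp|].
have finc z : S *m z = z -> S1 *m z = z.
  move=> hz; rewrite /S1 -mulmxA hz T_apply /u omBl.
  have -> : om (S *m y) z = om y z by rewrite -{1}hz om_symp.
  by rewrite subrr mulr0 scale0r addr0.
have hq1 x : om x (S1 *m x) = om x u ^+ 2.
  rewrite /S1 -mulmxA T_apply omDr omZr h0 add0r mul1r.
  have -> : om u (S *m x) = om x u.
    rewrite /u omBl om_symp // (polar h0 x y) om_anti omBr.
    by rewrite opprK addrC.
  by rewrite expr2.
set x0 := J *m u.
have hu0 : u != 0 by rewrite /u subr_eq0.
have hx0 : om x0 (S1 *m x0) != 0.
  by rewrite hq1 sqrf_eq0; apply: contra hu0 => /eqP /omJ ->.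
have hSx0 : S *m x0 != x0.
  by apply: contra hx0 => /eqP /finc ->; rewrite om_self.
set S2 := T (om x0 (S1 *m x0))^-1 (x0 - S1 *m x0) *m S1.
have hr2 : (\rank (S2 - 1%:M)%R < \rank (S - 1%:M)%R)%N.
  apply: (rank_dec _ (step_fix hx0) hSx0) => z hz.
  by apply: (step_fixS x0 hS1s); apply: finc.
have hle : (\rank (S2 - 1%:M)%R <= r)%N by rewrite -ltnS; apply: leq_trans hr2 hr.
have := IH _ (step_symp x0 hS1s) hle.
move=> /rep_T /rep_T; apply: rep_le; lia.
Qed.

Lemma pick_t (a1 b1 c1 a2 b2 c2 : R) : a1 != 0 -> c2 != 0 ->
  exists t : R, a1 + b1 * t + c1 * t ^+ 2 != 0 /\ a2 + b2 * t + c2 * t ^+ 2 != 0.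
Proof.
move=> ha1 hc2.
pose p1 : {poly R} := a1%:P + b1 *: 'X + c1 *: 'X^2.
pose p2 : {poly R} := a2%:P + b2 *: 'X + c2 *: 'X^2.
have e1 t : p1.[t] = a1 + b1 * t + c1 * t ^+ 2 by rewrite /p1 !hornerE.
have e2 t : p2.[t] = a2 + b2 * t + c2 * t ^+ 2 by rewrite /p2 !hornerE.
have p1n0 : p1 != 0.
  apply: contra ha1 => /eqP h; have := congr1 (fun p : {poly R} => p`_0) h.
  by rewrite /p1 !coefD coefC !coefZ coefX coefXn /= coef0 !mulr0 !addr0 => ->.
have p2n0 : p2 != 0.
  apply: contra hc2 => /eqP h; have := congr1 (fun p : {poly R} => p`_2) h.
  by rewrite /p2 !coefD coefC !coefZ coefX coefXn /= coef0 !mulr0 mulr1 !add0r => ->.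
have pq0 : p1 * p2 != 0 by rewrite mulf_neq0.
set rs := [seq i%:R | i <- iota 0 (size (p1 * p2))] : seq R.
have : ~~ all (root (p1 * p2)) rs.
  apply/negP => hall.
  have hu : uniq rs.
    rewrite map_inj_uniq ?iota_uniq //; exact: (mulrIn (oner_neq0 R)).
  by have := max_poly_roots pq0 hall hu; rewrite /rs size_map size_iota ltnn.
case/allPn => t _; rewrite /root hornerM mulf_eq0 negb_or e1 e2 => /andP [h1 h2].
by exists t.
Qed.

Lemma qexp S a b t : om (a + t *: b) (S *m (a + t *: b)) =
  om a (S *m a) + (om a (S *m b) + om b (S *m a)) * t + om b (S *m b) * t ^+ 2.
Proof.
rewrite mulmxDr -scalemxAr !(omDl, omDr, omZl, omZr); ring.
Qed.

Lemma inv_rep r : forall S, symplecticmx S -> (forall y, S *m y = - y -> y = 0) ->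
  (\rank (S - 1%:M)%R <= r)%N -> rep S r.
Proof.
elim: r => [|r IH] S hS hinv hr.
  by rewrite (rank0 hr); exact: rep1.
have [->|hS1] := eqVneq S 1%:M; first exact: rep1.
have [z0 hz0] : exists z0, om z0 (S *m z0) != 0.
  apply/not_existsP => hall.
  have h0 : forall x, om x (S *m x) = 0.
    by move=> x; have := hall x => /negP; rewrite negbK => /eqP.
  move/eqP: hS1; apply; apply: one_ext => v.
  have hSS : S *m (S *m v) = v.
    apply/eqP; rewrite -subr_eq0; apply/eqP/om_nondeg => a.
    rewrite omBr (polar h0 (S *m v) a) om_symp // om_anti opprK.
    by rewrite om_anti subrr.
  have : S *m (S *m v - v) = - (S *m v - v) by rewrite mulmxBr hSS opprB.
  by move/hinv/eqP; rewrite subr_eq0 => /eqP.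
set A := S + 1%:M.
have hA : A \in unitmx.
  rewrite unitmxE unitfE -det_tr; apply/det0P => -[v hv0 hv].
  move/eqP: hv0; apply; apply: trmx_inj; rewrite trmx0; apply: hinv.
  have := congr1 trmx hv; rewrite trmx_mul trmxK trmx0 /A mulmxDl mul1mx.
  by move/eqP; rewrite addr_eq0 => /eqP.
set W := invmx A.
have AW : A *m W = 1%:M by rewrite mulmxV.
have Ae z : A *m z = S *m z + z by rewrite /A mulmxDl mul1mx.
pose Q2 z := om (A *m z) (S *m (A *m z)).
have [z [hz1 hz2]] : exists z, om z (S *m z) != 0 /\ Q2 z != 0.
  set a := z0; set b := W *m z0.
  have AWz : A *m b = z0 by rewrite /b mulmxA AW mul1mx.
  have hb : Q2 b != 0 by rewrite /Q2 AWz.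
  have := @pick_t (om a (S *m a)) (om a (S *m b) + om b (S *m a)) (om b (S *m b))
     (Q2 a) (om (A *m a) (S *m (A *m b)) + om (A *m b) (S *m (A *m a))) (Q2 b) hz0 hb.
  move=> [t [ht1 ht2]]; exists (a + t *: b); split; first by rewrite qexp.
  by rewrite /Q2 mulmxDr -scalemxAr qexp.
set x := A *m z.
have hx : om x (S *m x) != 0 by [].
set S' := T (om x (S *m x))^-1 (x - S *m x) *m S.
have hr' : (\rank (S' - 1%:M)%R < \rank (S - 1%:M)%R)%N.
  exact: rank_dec (step_fixS x hS) (step_fix hx) (step_nfix hx).
have hle : (\rank (S' - 1%:M)%R <= r)%N by rewrite -ltnS; apply: leq_trans hr' hr.
apply: rep_T; apply: IH hle; first exact: step_symp.
move=> y; rewrite /S' -mulmxA T_apply.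
set c := (om x (S *m x))^-1; set lam := c * _.
set s := S *m z; set s2 := S *m s.
have ex : x = s + z by rewrite /x Ae.
have eu : x - S *m x = z - s2.
  rewrite ex mulmxDr -/s -/s2; apply/eqP; rewrite subr_eq.
  by rewrite addrA subrK addrC.
rewrite eu => hy.
have hw : S *m (y - lam *: (s - z)) = - (y - lam *: (s - z)).
  rewrite mulmxBr -scalemxAr mulmxBr -/s2.
  apply/eqP; rewrite -subr_eq0; apply/eqP.
  have : S *m y = - y - lam *: (z - s2) by rewrite -hy addrK.
  move=> ->; rewrite -/s; apply/matrixP => i j; rewrite !mxE; ring.
have ey : y = lam *: (s - z).
  by apply/eqP; rewrite -subr_eq0; apply/eqP; apply: hinv.
have hid : om x (S *m x) - om (z - s2) (s2 - s) = 4%:R * om z s.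
  have hss : om s s2 = om z s by rewrite /s2 /s om_symp.
  rewrite ex mulmxDr -/s -/s2 !(omDl, omDr, omBl, omBr) !om_self.
  rewrite !(omNl, omNr) !om_self (om_anti s s2) hss; ring.
have hlam : lam = c * lam * om (z - s2) (s2 - s).
  rewrite {1}/lam eu {1}ey -scalemxAr mulmxBr -/s2 omZr; ring.
have [l0|ln0] := eqVneq lam 0; first by rewrite ey l0 scale0r.
have h1 : c * om (z - s2) (s2 - s) = 1.
  apply: (mulIf ln0); rewrite mul1r [in RHS]hlam; ring.
have h2 : om (z - s2) (s2 - s) = om x (S *m x).
  by apply: (@mulfI _ c); [rewrite invr_eq0 | rewrite h1 /c mulVf].
have : om x (S *m x) - om (z - s2) (s2 - s) = 0 by rewrite h2 subrr.
rewrite hid => /eqP; rewrite mulf_eq0 pnatr_eq0 /= => /eqP h4.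
by move: hz1; rewrite -/s h4 eqxx.
Qed.

Definition lay (h c : R) u : {poly R} * 'cV[R]_m :=
  ((c / (h *+ 2)) *: 'X^2, J^T *m u).

Lemma lay_ok h c u x : h != 0 -> psn_layer h (lay h c u) x = T c u *m x.
Proof.
move=> h0; rewrite /psn_layer /lay /= T_apply mulmxA JJt mul1mx.
rewrite trmx_mul trmxK -/(om u x) derivZ derivXn /= !hornerE.
congr (_ + _ *: _).
rewrite -[LHS]/(h * c * (h *+ 2)^-1 * (om u x + om u x)).
by field.
Qed.

Lemma lay_deg d h c u : (2 <= d)%N -> psn_degree d [:: lay h c u].
Proof.
move=> hd; rewrite /psn_degree /= andbT; apply/andP; split.
  by apply: leq_trans (size_scale_leq _ _) _; rewrite size_polyXn.
by rewrite coefZ coefXn mulr0.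
Qed.

Lemma rep_psn S k h d : (2 <= d)%N -> h != 0 -> rep S k ->
  exists s : seq ({poly R} * 'cV[R]_m),
    [/\ psn_degree d s, (size s <= k)%N & forall x, S *m x = psn_eval h s x].
Proof.
move=> hd h0 [cs [hs hev]]; exists (map (fun p => lay h p.1 p.2) cs); split.
- rewrite /psn_degree all_map; apply/allP => p _ /=.
  by have := lay_deg h p.1 p.2 hd; rewrite /psn_degree /= andbT.
- by rewrite size_map.
move=> x; rewrite hev /evalT /psn_eval; elim: cs {hs hev} x => //= p cs IH x.
by rewrite IH lay_ok.
Qed.
End Alg.

Local Open Scope classical_set_scope.
Local Open Scope ring_scope.

Section Lim.
Variable R : realType.

Lemma cvg_sumR (I : Type) (r : seq I) (f : I -> nat -> R) (l : I -> R) :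
  (forall i, f i N @[N --> \oo] --> l i) ->
  (\sum_(i <- r) f i N) @[N --> \oo] --> \sum_(i <- r) l i.
Proof.
move=> hf; elim: r => [|i r IH].
  rewrite big_nil; under eq_cvg do rewrite big_nil; exact: cvg_cst.
rewrite big_cons; under eq_cvg do rewrite big_cons.
exact: cvgD.
Qed.

Definition mcvg p q (A : nat -> 'M[R]_(p, q)) (A0 : 'M[R]_(p, q)) :=
  forall i j, A N i j @[N --> \oo] --> A0 i j.

Lemma mcvgM p q r (A : nat -> 'M[R]_(p, q)) A0 (B : nat -> 'M[R]_(q, r)) B0 :
  mcvg A A0 -> mcvg B B0 -> mcvg (fun N => A N *m B N) (A0 *m B0).
Proof.
move=> hA hB i j; rewrite mxE; under eq_cvg do rewrite mxE.
by apply: cvg_sumR => l; apply: cvgM.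
Qed.

Lemma mcvgT p q (A : nat -> 'M[R]_(p, q)) A0 :
  mcvg A A0 -> mcvg (fun N => (A N)^T) A0^T.
Proof. by move=> hA i j; rewrite mxE; under eq_cvg do rewrite mxE; apply: hA. Qed.

Lemma mcvgC p q (A0 : 'M[R]_(p, q)) : mcvg (fun=> A0) A0.
Proof. by move=> i j; exact: cvg_cst. Qed.

Lemma mcvg_uniq p q (A : nat -> 'M[R]_(p, q)) A0 A1 :
  mcvg A A0 -> mcvg A A1 -> A0 = A1.
Proof.
move=> h0 h1; apply/matrixP => i j.
by rewrite -(cvg_lim _ (h0 i j)) // -(cvg_lim _ (h1 i j)).
Qed.

Lemma geo_le (z : R) N : 0 <= z -> z <= 1/2 -> \sum_(e < N) z ^+ e <= 2 - 2 * z ^+ N.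
Proof.
move=> z0 z1; elim: N => [|N IH]; first by rewrite big_ord0 expr0; lra.
rewrite big_ord_recr /= exprSr.
have w0 : 0 <= z ^+ N by apply: exprn_ge0.
have hz : 0 <= 1/2 - z by lra.
have := mulr_ge0 w0 hz.
move: IH; set S := \sum_(i < N) _; set w := z ^+ N => IH H; lra.
Qed.

Lemma geo_le2 (z : R) N : 0 <= z -> z <= 1/2 -> \sum_(e < N) z ^+ e <= 2.
Proof.
move=> z0 z1; apply: le_trans (geo_le N z0 z1) _.
have : 0 <= z ^+ N by apply: exprn_ge0.
lra.
Qed.

End Lim.

Section Poly.
Variable R : realType.

Definition pp N : {poly R} := \poly_(e < N) (e`!%:R)^-1.
Definition qq N : {poly R} := \poly_(e < N) ((e`!%:R)^-1 * (-1) ^+ e).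

Lemma fact_neq0 e : (e`!%:R : R) != 0.
Proof. by rewrite pnatr_eq0 -lt0n fact_gt0. Qed.

Lemma coef_qp N e : (e < N)%N -> (qq N * pp N)`_e = (e == 0%N)%:R.
Proof.
move=> heN; rewrite coefM.
have -> : \sum_(j < e.+1) (qq N)`_j * (pp N)`_(e - j) =
          (e`!%:R)^-1 * \sum_(j < e.+1) ((-1) ^+ j *+ 'C(e, j)).
  rewrite mulr_sumr; apply: eq_bigr => j _.
  have hj : (j <= e)%N by rewrite -ltnS.
  rewrite /qq /pp !coef_poly (leq_ltn_trans hj heN) (leq_ltn_trans (leq_subr j e) heN).
  have hb := bin_fact hj.
  have hbR : ('C(e, j)%:R * (j`!%:R * (e - j)`!%:R) : R) = e`!%:R.
    by rewrite -!natrM hb.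
  rewrite -mulr_natr; apply: (@mulfI _ (e`!%:R)); first exact: fact_neq0.
  rewrite -hbR; field; rewrite ?fact_neq0 //.
  by rewrite pnatr_eq0 -lt0n bin_gt0.
have -> : \sum_(j < e.+1) ((-1) ^+ j *+ 'C(e, j)) = (1 + (-1 : R)) ^+ e.
  by rewrite (exprDn (1:R) (-1) e); apply: eq_bigr => j _; rewrite expr1n mul1r.
rewrite subrr expr0n; have [->|he] := eqVneq e 0%N.
  by rewrite fact0 invr1 mulr1.
by rewrite mulr0.
Qed.

Lemma coef_qp_bound N e : `|(qq N * pp N)`_e| <= (2 ^ e)%:R.
Proof.
rewrite coefM; apply: le_trans (ler_norm_sum _ _ _) _.
apply: le_trans (_ : \sum_(j < e.+1) (1 : R) <= _).
  apply: ler_sum => j _; rewrite normrM -[1]mulr1.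
  have hq : `|(qq N)`_j| <= 1.
    rewrite /qq coef_poly; case: ifP => _; last by rewrite normr0.
    rewrite normrM normrX normrN normr1 expr1n mulr1 ger0_norm ?invr_ge0 //.
    by rewrite invf_le1 ?ler1n ?ltr0n ?fact_gt0.
  have hp : `|(pp N)`_(e - j)| <= 1.
    rewrite /pp coef_poly; case: ifP => _; last by rewrite normr0.
    rewrite ger0_norm ?invr_ge0 //.
    by rewrite invf_le1 ?ler1n ?ltr0n ?fact_gt0.
  by apply: ler_pM.
rewrite sumr_const card_ord ler_nat; exact: ltn_expl.
Qed.

Lemma size_qp N : (0 < N)%N -> (size (qq N * pp N - 1)%R <= N + N)%N.
Proof.
move=> hN; apply: leq_trans (size_add _ _) _; rewrite size_opp size_poly1 geq_max.
apply/andP; split; last by lia.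
apply: leq_trans (size_mul_leq _ _) _.
have h1 := size_poly N (fun e => (e`!%:R : R)^-1 * (-1) ^+ e).
have h2 := size_poly N (fun e => (e`!%:R : R)^-1).
apply: leq_trans (leq_pred _) _; exact: leq_add.
Qed.

End Poly.

Section Exp.
Variable R : realType.
Variable k : nat.
Local Notation M := 'M[R]_k.+1.
Implicit Types X : M.

Definition psum X (N : nat) : M := \sum_(e < N) (e`!%:R)^-1 *: X ^+ e.

Lemma psumE X N i j : psum X N i j = \sum_(e < N) (e`!%:R)^-1 * (X ^+ e) i j.
Proof. by rewrite /psum summxE; apply: eq_bigr => e _; rewrite mxE. Qed.

Lemma expmxE X i j : expmx X i j = limn (fun N => psum X N i j).
Proof. by rewrite /expmx mxE. Qed.

Variables (X : M) (beta : R).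
Hypothesis beta0 : 0 <= beta.
Hypothesis hX : forall i j, `|X i j| <= beta.
Let b := k.+1%:R * beta.

Lemma b0 : 0 <= b.
Proof. by rewrite /b mulr_ge0. Qed.

Lemma pow_bound e i j : `|(X ^+ e) i j| <= b ^+ e.
Proof.
elim: e i j => [|e IH] i j.
  by rewrite expr0 mxE; case: (i == j); rewrite ?normr1 ?normr0.
rewrite exprSr -mulmxE mxE; apply: le_trans (ler_norm_sum _ _ _) _.
apply: le_trans (_ : \sum_(l < k.+1) b ^+ e * beta <= _).
  apply: ler_sum => l _; rewrite normrM; apply: ler_pM => //; exact: normr_ge0.
by rewrite sumr_const card_ord -mulr_natr exprSr /b -mulrA (mulrC beta).
Qed.

Lemma term_bound e i j : `|(e`!%:R)^-1 * (X ^+ e) i j| <= b ^+ e.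
Proof.
rewrite normrM; rewrite -[b ^+ e]mul1r; apply: ler_pM => //.
rewrite ger0_norm ?invr_ge0 // invf_le1 ?ler1n ?ltr0n ?fact_gt0 //.
exact: pow_bound.
Qed.


Lemma psum_cvg (hb : b < 1) i j : cvgn (fun N => psum X N i j).
Proof.
have -> : (fun N => psum X N i j) = series (fun e => (e`!%:R)^-1 * (X ^+ e) i j).
  by apply/funext => N; rewrite psumE seriesEord.
apply: normed_cvg.
apply: (@series_le_cvg _ _ (geometric 1 b)).
- by move=> e; exact: normr_ge0.
- by move=> e; rewrite /geometric /= mul1r exprn_ge0 // b0.
- by move=> e; rewrite /geometric /= mul1r; exact: term_bound.
apply: is_cvg_geometric_series; rewrite ger0_norm ?b0 //.
Qed.

Lemma exp_close (hb : b <= 1/2) i j : `|expmx X i j - (1%:M : M) i j| <= b *+ 2.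
Proof.
have hb1 : b < 1 by lra.
have hc : cvgn (fun N => psum X N i j) by apply: psum_cvg.
have key N : `|psum X N.+1 i j - (1%:M : M) i j| <= b *+ 2.
  rewrite psumE big_ord_recl /= expr0 fact0 invr1 mul1r.
  have -> : (1%:M : M) i j = (1 : M) i j by [].
  rewrite addrAC subrr add0r.
  apply: le_trans (ler_norm_sum _ _ _) _.
  apply: le_trans (_ : \sum_(e < N) b * b ^+ e <= _).
    by apply: ler_sum => e _; rewrite -exprS; exact: term_bound.
  rewrite -mulr_sumr.
  have : b * \sum_(e < N) b ^+ e <= b * 2.
    apply: ler_pM => //; first exact: b0.
      by apply: sumr_ge0 => e _; apply: exprn_ge0; exact: b0.
    exact: geo_le2 N b0 hb.
  rewrite mulr2n; lra.
rewrite expmxE ler_norml; apply/andP; split.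
- rewrite lerBrDr; apply: limr_ge => //.
  near=> N; have hN : (1 <= N)%N by near: N; exact: nbhs_infty_ge.
  have := key N.-1; rewrite prednK // ler_norml => /andP [h1 h2]; lra.
- rewrite lerBlDr; apply: limr_le => //.
  near=> N; have hN : (1 <= N)%N by near: N; exact: nbhs_infty_ge.
  have := key N.-1; rewrite prednK // ler_norml => /andP [h1 h2]; lra.
Unshelve. all: by end_near.
Qed.


Lemma hpoly N (f : nat -> R) : horner_mx X (\poly_(e < N) f e) = \sum_(e < N) f e *: X ^+ e.
Proof.
rewrite poly_def rmorph_sum /=; apply: eq_bigr => e _.
by rewrite linearZ /= rmorphXn /= horner_mx_X.
Qed.

Definition qsum N : M := \sum_(e < N) ((e`!%:R)^-1 * (-1) ^+ e) *: X ^+ e.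

Lemma psum_h N : psum X N = horner_mx X (pp R N).
Proof. by rewrite /pp hpoly. Qed.

Lemma qsum_h N : qsum N = horner_mx X (qq R N).
Proof. by rewrite /qq hpoly. Qed.

Lemma D_bound (hb : b <= 1/8) N i j : (0 < N)%N ->
  `|(qsum N *m psum X N - 1%:M) i j| <= 2 * (4 * b) ^+ N.
Proof.
move=> hN.
have -> : qsum N *m psum X N - 1%:M = horner_mx X (qq R N * pp R N - 1).
  by rewrite qsum_h psum_h rmorphB rmorphM /= -mulmxE -polyC1 horner_mx_C.
set r := qq R N * pp R N - 1.
have hr : r = \poly_(e < N + N) r`_e.
  apply/polyP => e; rewrite coef_poly; case: ltnP => // he.
  by rewrite nth_default // (leq_trans (@size_qp R N hN) he).
rewrite hr hpoly summxE.
apply: le_trans (ler_norm_sum _ _ _) _.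
apply: le_trans (_ : \sum_(e < N + N) (4 * b) ^+ N * (1/2) ^+ e <= _).
  apply: ler_sum => e _; rewrite mxE normrM.
  have hb0 := b0.
  have [heN|heN] := ltnP e N.
    rewrite /r coefB coef_qp // coef1 subrr normr0 mul0r.
    by apply: mulr_ge0; apply: exprn_ge0; lra.
  have hc : `|r`_e| <= 2 ^+ e.
    rewrite /r coefB coef1; have -> : (nat_of_ord e == 0%N) = false by apply/eqP; lia.
    by rewrite subr0 -natrX; exact: coef_qp_bound.
  apply: le_trans (_ : 2 ^+ e * b ^+ e <= _).
    apply: ler_pM => //; exact: pow_bound.
  rewrite -exprMn.
  have -> : 2 * b = (4 * b) * (1/2) by field.
  rewrite exprMn; apply: ler_pM => //; try by apply: exprn_ge0; lra.
  apply: ler_wiXn2l => //; lra.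
rewrite -mulr_sumr mulrC; apply: ler_pM => //.
- by apply: sumr_ge0 => e _; apply: exprn_ge0; lra.
- by apply: exprn_ge0; have := b0; lra.
- by apply: geo_le2; lra.
Qed.

Lemma D_cvg (hb : b <= 1/8) : mcvg (fun N => qsum N *m psum X N) 1%:M.
Proof.
move=> i j.
have hb0 := b0.
have hz : `|4 * b| < 1 by rewrite ger0_norm; lra.
have c0 : 2 * (4 * b) ^+ N @[N --> \oo] --> 0.
  rewrite -(mulr0 2); apply: cvgM; [exact: cvg_cst | exact: cvg_expr].
have c1 : (qsum N *m psum X N - 1%:M) i j @[N --> \oo] --> 0.
  apply: (@squeeze_cvgr _ _ _ _ (fun N => - (2 * (4 * b) ^+ N)) (fun N => 2 * (4 * b) ^+ N)).
  - near=> N; have hN : (1 <= N)%N by near: N; exact: nbhs_infty_ge.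
    by rewrite -ler_norml; apply: D_bound.
  - by rewrite -oppr0; apply: cvgN.
  - exact: c0.
have -> : (1%:M : M) i j = 0 + (1%:M : M) i j by rewrite add0r.
have e : (fun N => (qsum N *m psum X N) i j) = (fun N => (qsum N *m psum X N - 1%:M) i j + (1%:M : M) i j).
  by apply/funext => N; rewrite !mxE subrK.
rewrite e; apply: cvgD => //; exact: cvg_cst.
Unshelve. all: by end_near.
Qed.


Lemma trpow (J0 : M) : X^T *m J0 = - (J0 *m X) ->
  forall e, (X ^+ e)^T *m J0 = (-1) ^+ e *: (J0 *m X ^+ e).
Proof.
move=> hJ; elim=> [|e IH].
  rewrite !expr0 scale1r. change ((1%:M : M)^T *m J0 = J0 *m 1%:M).
  by rewrite trmx1 mul1mx mulmx1.
rewrite {1}exprS -[X * _]/(X *m X ^+ e) trmx_mul -mulmxA hJ mulmxN mulmxA IH -scalemxAl.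
by rewrite exprSr exprSr -[X ^+ e * X]/(X ^+ e *m X) mulmxA mulrN1 scaleNr.
Qed.

Lemma exp_symp (J0 : M) (hb : b <= 1/8) : X^T *m J0 = - (J0 *m X) ->
  (expmx X)^T *m J0 *m expmx X = J0.
Proof.
move=> hJ.
have hb1 : b < 1 by lra.
have hcv : mcvg (psum X) (expmx X).
  by move=> i j; rewrite expmxE; exact: psum_cvg.
have e1 N : (psum X N)^T *m J0 *m psum X N = J0 *m (qsum N *m psum X N).
  rewrite mulmxA; congr (_ *m _).
  rewrite /psum /qsum linear_sum /= mulmx_suml mulmx_sumr; apply: eq_bigr => e _.
  by rewrite linearZ /= -scalemxAl trpow // scalerA -scalemxAr.
have A1 := mcvgM (mcvgM (mcvgT hcv) (mcvgC (A0 := J0))) hcv.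
have A2 := mcvgM (mcvgC (A0 := J0)) (D_cvg hb).
have A1' : mcvg (fun N => J0 *m (qsum N *m psum X N)) ((expmx X)^T *m J0 *m expmx X).
  by move=> i j; have := A1 i j; under eq_cvg do rewrite e1.
by rewrite (mcvg_uniq A1' A2) mulmx1.
Qed.

Lemma exp_inj (hb : b <= 1/8) (hk : b * k.+1%:R < 1) (y : 'cV[R]_k.+1) :
  expmx X *m y = - y -> y = 0.
Proof.
move=> hy; have hb0 := b0.
set D := expmx X - 1%:M.
have hDy : D *m y = - (y *+ 2) by rewrite /D mulmxBl mul1mx hy mulr2n opprD.
set mu := \sum_i `|y i 0|.
have mu0 : 0 <= mu by apply: sumr_ge0 => i _; exact: normr_ge0.
have h1 : \sum_i `|(D *m y) i 0| = mu *+ 2.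
  rewrite hDy -sumrMnl; apply: eq_bigr => i _.
  by rewrite mxE normrN mxE -mulr2n normrMn.
have h2 : \sum_i `|(D *m y) i 0| <= \sum_(i < k.+1) (b *+ 2 * mu).
  apply: ler_sum => i _; rewrite mxE; apply: le_trans (ler_norm_sum _ _ _) _.
  rewrite /mu mulr_sumr; apply: ler_sum => l _; rewrite normrM.
  apply: ler_wpM2r; first exact: normr_ge0.
  rewrite /D mxE [X in `|_ + X|]mxE; apply: exp_close; lra.
rewrite h1 sumr_const card_ord in h2.
have hmu : mu = 0.
  set K : R := k.+1%:R.
  have e2 : b *+ 2 * mu *+ k.+1 = mu *+ 2 * (b * K).
    by rewrite /K -[_ *+ k.+1]mulr_natr -[mu *+ 2]mulr_natr -[b *+ 2]mulr_natr; ring.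
  rewrite e2 in h2.
  have ht : 0 < 1 - b * K by rewrite subr_gt0.
  have : mu *+ 2 * (1 - b * K) <= 0.
    by rewrite mulrBr mulr1 subr_le0.
  rewrite pmulr_lle0 // => hm; apply/eqP; rewrite eq_le mu0 andbT.
  by move: hm; rewrite -mulr_natr pmulr_lle0.
apply/matrixP => i j; rewrite (ord1 j) mxE.
have := psumr_eq0P (fun l _ => normr_ge0 (y l 0)) hmu (i:=i) isT.
by move/eqP; rewrite normr_eq0 => /eqP.
Qed.

End Exp.
Local Close Scope classical_set_scope.
Unset Implicit Arguments.

Lemma entry_le_sum (R : realType) p (K : 'M[R]_p) i j :
  `|K i j| <= \sum_i0 \sum_j0 `|K i0 j0|.
Proof.
rewrite (bigD1 i) //= (bigD1 j) //= -addrA lerDl.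
apply: addr_ge0; apply: sumr_ge0 => l _ //; apply: sumr_ge0 => l' _; exact: normr_ge0.
Qed.

Theorem theorem2 (R : realType) (n d : nat) (hd : (2 <= d)%N) :
  (* (i) arbitrary symplectic S: k <= 5n *)
  (forall (S : 'M[R]_(n + n)) (h : R), symplecticmx S -> 0 < h ->
     exists s : seq ({poly R} * 'cV[R]_(n + n)),
       [/\ psn_degree d s, (size s <= 5 * n)%N &
           forall x : 'cV[R]_(n + n), S *m x = psn_eval h s x]) /\
  (* (ii) symplectic S with invertible upper-left block A: k <= 4n *)
  (forall (S : 'M[R]_(n + n)) (h : R), symplecticmx S -> \det (ulsubmx S) != 0 ->
     0 < h ->
     exists s : seq ({poly R} * 'cV[R]_(n + n)),
       [/\ psn_degree d s, (size s <= 4 * n)%N &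
           forall x : 'cV[R]_(n + n), S *m x = psn_eval h s x]) /\
  (* (iii) S = exp(h J M), M symmetric, h > 0 small enough: time step h, k <= 2n *)
  (forall M : 'M[R]_(n + n), M^T = M ->
     exists h0 : R, 0 < h0 /\
       forall h : R, 0 < h -> h < h0 ->
         exists s : seq ({poly R} * 'cV[R]_(n + n)),
           [/\ psn_degree d s, (size s <= 2 * n)%N &
               forall x : 'cV[R]_(n + n),
                 expmx (h *: (Jmx R n *m M)) *m x = psn_eval h s x]).
Proof.
have gen4 (S : 'M[R]_(n + n)) : symplecticmx S -> rep S (4 * n).
  move=> hS; apply: rep_le (gen_rep hS (rank_leq_row _)); lia.
split; [|split].
- move=> S h hS h0; apply: rep_psn => //; first by rewrite gt_eqF.
  by apply: rep_le (gen4 S hS); lia.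
- move=> S h hS _ h0; apply: rep_psn => //; first by rewrite gt_eqF.
  exact: gen4.
move=> M hM.
clear gen4; case: n M hM => [|n'] M hM.
  exists 1; split => // h _ _; exists [::]; split => // x.
  by apply/matrixP => -[i hi].
set K := Jmx R n'.+1 *m M.
set al := \sum_i \sum_j `|K i j|.
have al0 : 0 <= al by apply: sumr_ge0 => i _; apply: sumr_ge0 => j _; exact: normr_ge0.
set mm : R := (n'.+1 + n'.+1)%:R.
have mm1 : 1 <= mm by rewrite /mm ler1n.
set h0 := (8 * mm * mm * (al + 1))^-1.
have hpos : 0 < 8 * mm * mm * (al + 1).
  by rewrite !mulr_gt0 //; lra.
exists h0; split; first by rewrite invr_gt0.
move=> h hh0 hlt.
set X := h *: K.
set beta := h * al.
have beta0 : 0 <= beta by rewrite mulr_ge0 // ltW.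
have hX i j : `|X i j| <= beta.
  rewrite mxE normrM gtr0_norm // ler_pM2l //; exact: entry_le_sum.
have hbm : mm * beta * mm < 1 / 8.
  have h1 : h * (8 * mm * mm * (al + 1)) < 1.
    have := hlt; rewrite -(ltr_pM2r hpos) /h0 mulVf //; exact: lt0r_neq0.
  set P := h * mm * mm.
  have e0 : 0 <= P by rewrite !mulr_ge0 // ?ltW //; lra.
  have e1 : h * (8 * mm * mm * (al + 1)) = 8 * (P * al) + 8 * P by rewrite /P; ring.
  have e2 : mm * beta * mm = P * al by rewrite /P /beta; ring.
  rewrite e2; rewrite e1 in h1; lra.
have hb : mm * beta <= 1 / 8.
  have e3 : 0 <= mm * beta * (mm - 1) by rewrite mulr_ge0 // ?mulr_ge0 //; lra.
  have e4 : mm * beta * (mm - 1) = mm * beta * mm - mm * beta by ring.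
  lra.
have hJ : X^T *m Jmx R n'.+1 = - (Jmx R n'.+1 *m X).
  rewrite /X /K linearZ /= trmx_mul hM trJ -scalemxAl -scalemxAr.
  rewrite mulmxN mulNmx -mulmxA JJ mulmxN mulmx1 opprK.
  by rewrite mulmxA JJ mulNmx mul1mx scalerN opprK.
have hsym : symplecticmx (expmx X).
  exact: (exp_symp (k := n' + n'.+1) beta0 hX hb hJ).
have hinv (y : 'cV[R]_(n'.+1 + n'.+1)) : expmx X *m y = - y -> y = 0.
  apply: (exp_inj (k := n' + n'.+1) beta0 hX hb).
  rewrite -/mm mulrC; lra.
have := inv_rep hsym hinv (rank_leq_row _).
move=> /(rep_le (k' := 2 * n'.+1)) hr.
apply: rep_psn => //; first by rewrite gt_eqF.
by apply: hr; lia.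
Qed.
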